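(* Consider metrics on the four-sphere of the form $$ds^2=dr^2+\frac{f(r)^2}{4}(d\theta^2+\sin^2\theta\,d\phi^2)+\frac{g(r)^2}{4}(d\psi+\cos\theta\,d\phi)^2,$$ $0\le r\le\pi$, $0\le\theta\le\pi$, $0\le\phi\le 2\pi$, $0\le\psi\le4\pi$, with $f,g$ smooth, and the system of ordinary differential equations $$\frac{f''}{f}=\frac{f'g'}{fg}-\frac{g^2}{f^4},\qquad \frac{g''}{g}=\frac{f'^2-4}{f^2}+\frac{3g^2}{f^4},$$ which is satisfied by the round four-sphere $f(r)=g(r)=\sin r$ and whose solutions give Einstein metrics of this form. Substitute $f(r)=\sin r+\epsilon p(r)$, $g(r)=\sin r+\epsilon q(r)$ and keep terms of first order in $\epsilon$, obtaining the linearized system $$p''-q=(p'+q')\cot r+\frac{3}{\sin^2 r}(p-q),\qquad q''+q-2p=2p'\cot r-\frac{6}{\sin^2 r}(p-q).$$ Then the pairs $(p,q)$ of smooth (in particular finite) real functions on $[0,\pi]$ solving this linearized system are exactly $$p(r)=q(r)=c_1\cos r+c_2(\sin r-r\cos r),\qquad c_1,c_2\in\mathbb{R}.$$ Moreover, for every such solution, the metric with $f=g=\sin r+\epsilon p$ has Riemann curvature tensor (in the orthonormal frame $e^1=\tfrac f2 d\theta$, $e^2=\tfrac f2\sin\theta\,d\phi$, $e^3=\tfrac g2(d\psi+\cos\theta\,d\phi)$, $e^4=dr$) $$R_{abcd}=(1-2\epsilon c_2)(\delta_{ac}\delta_{bd}-\delta_{ad}\delta_{bc})+O(\epsilon^2),$$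 i.e. to first order in $\epsilon$ it is a conformally flat Einstein metric of constant sectional curvature $1-2\epsilon c_2$, so the deformation changes at most the size of the sphere.
   Context: An Einstein metric is one whose Ricci tensor is a constant multiple of the metric. The round unit four-sphere corresponds to $f=g=\sin r$ and has constant sectional curvature $1$. *)

(* Defs.v *)
From HB Require Import structures.
From mathcomp Require Import all_boot all_order all_algebra.
From mathcomp Require Import all_classical all_reals all_analysis.
Set Implicit Arguments. Unset Strict Implicit. Unset Printing Implicit Defensive.
Import Order.TTheory GRing.Theory Num.Theory.
Import numFieldNormedType.Exports.
Local Open Scope ring_scope.

Definition i_theta : 'I_4 := @Ordinal 4 0 isT.
Definition i_phi : 'I_4 := @Ordinal 4 1 isT.
Definition i_psi : 'I_4 := @Ordinal 4 2 isT.
Definition i_r : 'I_4 := @Ordinal 4 3 isT.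

Section Defs.
Variable R : realType.

Definition smooth (f : R -> R) : Prop :=
  forall (n : nat) (x : R), derivable (derive1n n f) x 1.

Definition cot (r : R) : R := cos r / sin r.

Definition linearized_system (p q : R -> R) (r : R) : Prop :=
  derive1n 2 p r - q r
    = (derive1 p r + derive1 q r) * cot r + 3 / (sin r ^+ 2) * (p r - q r)
  /\ derive1n 2 q r + q r - 2 * p r
    = 2 * derive1 p r * cot r - 6 / (sin r ^+ 2) * (p r - q r).

Definition sol (c1 c2 : R) (r : R) : R := c1 * cos r + c2 * (sin r - r * cos r).

(* A point of the chart is a row vector x : 'rV[R]_4; coordinates are
   x 0 0 = theta, x 0 1 = phi, x 0 2 = psi, x 0 3 = r.                    *)
Definition chart_coord (x : 'rV[R]_4) (i : 'I_4) : R := x ord0 i.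

Definition pd (F : 'rV[R]_4 -> R) (i : 'I_4) (x : 'rV[R]_4) : R :=
  'D_(delta_mx ord0 i) F x.

(* A metric is given by a coframe Th : row a of Th x gives the components
   e^a = sum_i Th x a i dx^i of an orthonormal coframe.
   Metric g_ij = sum_a Th a i Th a j, i.e. G = Th^T Th. *)
Definition metric (Th : 'rV[R]_4 -> 'M[R]_4) (x : 'rV[R]_4) : 'M[R]_4 :=
  (Th x)^T *m Th x.

Definition metric_inv (Th : 'rV[R]_4 -> 'M[R]_4) (x : 'rV[R]_4) : 'M[R]_4 :=
  invmx (metric Th x).

Definition christoffel (Th : 'rV[R]_4 -> 'M[R]_4) (k i j : 'I_4)
    (x : 'rV[R]_4) : R :=
  2^-1 * \sum_(l < 4) metric_inv Th x k l *
    (pd (fun y => metric Th y j l) i x + pd (fun y => metric Th y i l) j x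
     - pd (fun y => metric Th y i j) l x).

(* R^m_{ijl}:  R(d_i, d_j) d_l = sum_m R^m_{ijl} d_m,
   with R(X,Y)Z = nabla_X nabla_Y Z - nabla_Y nabla_X Z - nabla_[X,Y] Z. *)
Definition riemann_up (Th : 'rV[R]_4 -> 'M[R]_4) (m i j l : 'I_4)
    (x : 'rV[R]_4) : R :=
  pd (christoffel Th m j l) i x - pd (christoffel Th m i l) j x
  + \sum_(n < 4) (christoffel Th m i n x * christoffel Th n j l x
                  - christoffel Th m j n x * christoffel Th n i l x).

(* R_{ijkl} = g(R(d_i, d_j) d_l, d_k), so that R_{ijij} is the sectional
   curvature numerator (round unit sphere: R_{abcd} = d_ac d_bd - d_ad d_bc
   in an orthonormal frame). *)
Definition riemann_down (Th : 'rV[R]_4 -> 'M[R]_4) (i j k l : 'I_4)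
    (x : 'rV[R]_4) : R :=
  \sum_(m < 4) metric Th x k m * riemann_up Th m i j l x.

(* The orthonormal frame (E_a) dual to the coframe (e^a): the matrix
   E = Th^{-1}, E_a = sum_i E i a d_i. *)
Definition frame (Th : 'rV[R]_4 -> 'M[R]_4) (x : 'rV[R]_4) : 'M[R]_4 :=
  invmx (Th x).

Definition riemann_frame (Th : 'rV[R]_4 -> 'M[R]_4) (a b c d : 'I_4)
    (x : 'rV[R]_4) : R :=
  \sum_(i < 4) \sum_(j < 4) \sum_(k < 4) \sum_(l < 4)
    frame Th x i a * frame Th x j b * frame Th x k c * frame Th x l d
    * riemann_down Th i j k l x.

(* The coframe of the metric
   ds^2 = dr^2 + f^2/4 (dtheta^2 + sin^2 theta dphi^2) + g^2/4 (dpsi + cos theta dphi)^2: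
   e^1 = f/2 dtheta, e^2 = f/2 sin theta dphi,
   e^3 = g/2 (dpsi + cos theta dphi), e^4 = dr
   (frame index a+1 corresponds to row a). *)
Definition bianchi_coframe (f g : R -> R) (x : 'rV[R]_4) : 'M[R]_4 :=
  let th := chart_coord x i_theta in
  let r := chart_coord x i_r in
  \matrix_(a < 4, i < 4)
    (if (a == 0 :> nat) && (i == 0 :> nat) then f r / 2
     else if (a == 1 :> nat) && (i == 1 :> nat) then f r / 2 * sin th
     else if (a == 2 :> nat) && (i == 1 :> nat) then g r / 2 * cos th
     else if (a == 2 :> nat) && (i == 2 :> nat) then g r / 2
     else if (a == 3 :> nat) && (i == 3 :> nat) then 1
     else 0).

End Defs.

(* Main.v *)
Require Import Defs.
From HB Require Import structures.
From mathcomp Require Import all_boot all_order all_algebra.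
From mathcomp Require Import all_classical all_reals all_analysis.
Import Order.TTheory GRing.Theory Num.Theory.
Import numFieldNormedType.Exports.

From mathcomp Require Import ring lra.

Module M_Alg.
Import Order.TTheory GRing.Theory Num.Theory.
Local Open Scope ring_scope.
Set Implicit Arguments. Unset Strict Implicit.

Section Alg.
Variable R : realFieldType.

Definition thf (n : nat) (s c : R) : R :=
  match n with 0 => 0 | 1 => 1 | 2 => s / 2 | 3 => c / (2 * s) | 4 => - 1 / (2 * s) | _ => c end.
Definition dthf (n : nat) (s c : R) : R :=
  match n with 0 => 0 | 1 => 0 | 2 => c / 2 | 3 => - (s * s + c * c) / (2 * s * s)
  | 4 => c / (2 * s * s) | _ => - s end.
Definition rf (n : nat) (F F1 : R) : R :=
  match n with 0 => 1 | 1 => F1 / F | _ => - (F * F1) / 4 end.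
Definition drf (n : nat) (F F1 F2 : R) : R :=
  match n with 0 => 0 | 1 => (F2 * F - F1 * F1) / (F * F) | _ => - (F1 * F1 + F * F2) / 4 end.

Definition ka (k i j : nat) : nat :=
  match k, i, j with
  | 0, 1, 2 | 0, 2, 1 => 2
  | 1, 0, 1 | 1, 1, 0 | 2, 0, 2 | 2, 2, 0 => 3
  | 1, 0, 2 | 1, 2, 0 | 2, 0, 1 | 2, 1, 0 => 4
  | 0, 3, 0 | 0, 0, 3 | 1, 3, 1 | 1, 1, 3 | 2, 3, 2 | 2, 2, 3 => 1
  | 3, 0, 0 | 3, 1, 1 | 3, 2, 2 => 1
  | 3, 1, 2 | 3, 2, 1 => 5
  | _, _, _ => 0 end.
Definition kb (k i j : nat) : nat :=
  match k, i, j with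
  | 0, 3, 0 | 0, 0, 3 | 1, 3, 1 | 1, 1, 3 | 2, 3, 2 | 2, 2, 3 => 1
  | 3, _, _ => 2
  | _, _, _ => 0 end.

Definition Gt (s c F F1 : R) (k i j : nat) : R := thf (ka k i j) s c * rf (kb k i j) F F1.
Definition dGt (s c F F1 F2 : R) (d k i j : nat) : R :=
  if d == 0%N then dthf (ka k i j) s c * rf (kb k i j) F F1
  else if d == 3%N then thf (ka k i j) s c * drf (kb k i j) F F1 F2 else 0.

Definition gm (c F : R) (j l : nat) : R :=
  match j, l with
  | 0, 0 | 1, 1 | 2, 2 => F * F / 4
  | 1, 2 | 2, 1 => F * F / 4 * c
  | 3, 3 => 1
  | _, _ => 0 end.

Definition dl (a b : nat) : R := (a == b)%:R.

Definition Rup (s c F F1 F2 : R) (m i j l : nat) : R :=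
  dGt s c F F1 F2 i m j l - dGt s c F F1 F2 j m i l
  + \sum_(n < 4) (Gt s c F F1 m i n * Gt s c F F1 n j l - Gt s c F F1 m j n * Gt s c F F1 n i l).

Definition Kt (F F1 : R) := (1 - F1 * F1) / (F * F).
Definition Kr (F F2 : R) := - F2 / F.

Definition Uupg (c F kt dd : R) (m i j l : nat) : R :=
  kt * (dl m i * gm c F j l - dl m j * gm c F i l)
  + dd * (dl m i * dl j 3 * dl l 3 + dl m 3 * dl i 3 * gm c F j l
        - dl m 3 * dl j 3 * gm c F i l - dl m j * dl i 3 * dl l 3).
Definition Uup (c F F1 F2 : R) (m i j l : nat) : R :=
  Uupg c F (Kt F F1) (Kr F F2 - Kt F F1) m i j l.

Lemma Rup_ok (t F F1 F2 : R) (m i j l : 'I_4) : t != 0 -> F != 0 ->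
  Rup (2 * t / (1 + t ^+ 2)) ((1 - t ^+ 2) / (1 + t ^+ 2)) F F1 F2 m i j l
  = Uup ((1 - t ^+ 2) / (1 + t ^+ 2)) F F1 F2 m i j l.
Proof.
move=> t0 F0.
have t2 : 1 + t ^+ 2 != 0 by rewrite lt0r_neq0 // ltr_pwDl // sqr_ge0.
rewrite /Rup !big_ord_recr big_ord0 /= add0r.
case: m => [[|[|[|[|?]]]] ?] //; case: i => [[|[|[|[|?]]]] ?] //;
case: j => [[|[|[|[|?]]]] ?] //; case: l => [[|[|[|[|?]]]] ?] //;
rewrite /Uup /Uupg /dGt /Gt /dl /= /Kt /Kr; field; rewrite ?t0 ?F0 ?t2 /= ?mulf_neq0 //.
Qed.
End Alg.
Arguments dl {R}.

End M_Alg.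
Import M_Alg.

Module M_Alg2.
Import Order.TTheory GRing.Theory Num.Theory.
Local Open Scope ring_scope.
Set Implicit Arguments. Unset Strict Implicit.

Section Alg2.
Variable R : realFieldType.

Definition ginv (s c F : R) (j l : nat) : R :=
  match j, l with
  | 0, 0 => 4 / (F * F)
  | 1, 1 | 2, 2 => 4 / (F * F * (s * s))
  | 1, 2 | 2, 1 => - (4 * c) / (F * F * (s * s))
  | 3, 3 => 1
  | _, _ => 0 end.

Definition dgm (s c F F1 : R) (d j l : nat) : R :=
  if d == 0%N then
    match j, l with 1, 2 | 2, 1 => - (F * F / 4 * s) | _, _ => 0 end
  else if d == 3%N then
    match j, l with
    | 0, 0 | 1, 1 | 2, 2 => F * F1 / 2
    | 1, 2 | 2, 1 => F * F1 / 2 * c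
    | _, _ => 0 end
  else 0.

Definition thm (s c F : R) (a i : nat) : R :=
  match a, i with
  | 0, 0 => F / 2 | 1, 1 => F / 2 * s | 2, 1 => F / 2 * c | 2, 2 => F / 2 | 3, 3 => 1
  | _, _ => 0 end.
Definition einv (s c F : R) (a i : nat) : R :=
  match a, i with
  | 0, 0 => 2 / F | 1, 1 => 2 / (F * s) | 2, 1 => - (2 * c) / (F * s) | 2, 2 => 2 / F | 3, 3 => 1
  | _, _ => 0 end.

Definition Rd (c F kt dd : R) (i j k l : nat) : R :=
  kt * (gm c F i k * gm c F j l - gm c F i l * gm c F j k)
  + dd * (gm c F i k * dl j 3 * dl l 3 + dl i 3 * dl k 3 * gm c F j l
          - gm c F i l * dl j 3 * dl k 3 - dl i 3 * dl l 3 * gm c F j k).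

Lemma t2_neq0 (t : R) : 1 + t ^+ 2 != 0.
Proof. by rewrite lt0r_neq0 // ltr_pwDl // sqr_ge0. Qed.

Lemma A2 (t F F1 : R) (k i j : 'I_4) : t != 0 -> F != 0 ->
  let s := 2 * t / (1 + t ^+ 2) in let c := (1 - t ^+ 2) / (1 + t ^+ 2) in
  2^-1 * \sum_(l < 4) ginv s c F k l * (dgm s c F F1 i j l + dgm s c F F1 j i l - dgm s c F F1 l i j)
  = Gt s c F F1 k i j.
Proof.
move=> t0 F0 s c; have t2 := t2_neq0 t.
rewrite !big_ord_recr big_ord0 /= add0r /s /c.
case: k => [[|[|[|[|?]]]] ?] //; case: i => [[|[|[|[|?]]]] ?] //;
case: j => [[|[|[|[|?]]]] ?] //;
rewrite /Gt /dgm /ginv /=; field; rewrite ?t0 ?F0 ?t2 /= ?mulf_neq0 //.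
Qed.

Lemma A3 (t F : R) (j l : 'I_4) : t != 0 -> F != 0 ->
  let s := 2 * t / (1 + t ^+ 2) in let c := (1 - t ^+ 2) / (1 + t ^+ 2) in
  \sum_(m < 4) gm c F j m * ginv s c F m l = dl j l.
Proof.
move=> t0 F0 s c; have t2 := t2_neq0 t.
rewrite !big_ord_recr big_ord0 /= add0r /s /c.
case: j => [[|[|[|[|?]]]] ?] //; case: l => [[|[|[|[|?]]]] ?] //;
rewrite /gm /ginv /dl /=; field; rewrite ?t0 ?F0 ?t2 /= ?mulf_neq0 //.
Qed.

Lemma A4 (c F kt dd : R) (i j k l : 'I_4) :
  \sum_(m < 4) gm c F k m * Uupg c F kt dd m i j l = Rd c F kt dd i j k l.
Proof.
rewrite !big_ord_recr big_ord0 /= add0r.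
case: i => [[|[|[|[|?]]]] ?] //; case: j => [[|[|[|[|?]]]] ?] //;
case: k => [[|[|[|[|?]]]] ?] //; case: l => [[|[|[|[|?]]]] ?] //;
rewrite /Uupg /Rd /gm /dl /=; ring.
Qed.

Lemma A5 (s c F : R) (a i : 'I_4) : s != 0 -> F != 0 ->
  \sum_(m < 4) thm s c F a m * einv s c F m i = dl a i.
Proof.
move=> s0 F0.
rewrite !big_ord_recr big_ord0 /= add0r.
case: a => [[|[|[|[|?]]]] ?] //; case: i => [[|[|[|[|?]]]] ?] //;
rewrite /thm /einv /dl /=; field; rewrite ?s0 ?F0 /= ?mulf_neq0 //.
Qed.

Lemma A6 (t F : R) (a c' : 'I_4) : t != 0 -> F != 0 ->
  let s := 2 * t / (1 + t ^+ 2) in let c := (1 - t ^+ 2) / (1 + t ^+ 2) in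
  \sum_(i < 4) \sum_(k < 4) einv s c F i a * einv s c F k c' * gm c F i k = dl a c'.
Proof.
move=> t0 F0 s c; have t2 := t2_neq0 t.
rewrite !big_ord_recr !big_ord0 /= !add0r /s /c.
case: a => [[|[|[|[|?]]]] ?] //; case: c' => [[|[|[|[|?]]]] ?] //;
rewrite /einv /gm /dl /=; field; rewrite ?t0 ?F0 ?t2 /= ?mulf_neq0 //.
Qed.

Lemma A7 (s c F : R) (a : 'I_4) : einv s c F 3 a = dl a 3.
Proof. by case: a => [[|[|[|[|?]]]] ?]. Qed.
End Alg2.

End M_Alg2.
Import M_Alg2.

Module M_Sum4.
Import Order.TTheory GRing.Theory Num.Theory.
Local Open Scope ring_scope.
Set Implicit Arguments. Unset Strict Implicit.

Section Sum4.
Variable R : comRingType.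
Implicit Types f g : 'I_4 -> 'I_4 -> 'I_4 -> 'I_4 -> R.

Definition S4 f := \sum_(i < 4) \sum_(j < 4) \sum_(k < 4) \sum_(l < 4) f i j k l.

Lemma S4D f g : S4 (fun i j k l => f i j k l + g i j k l) = S4 f + S4 g.
Proof.
rewrite /S4 -big_split; apply: eq_bigr => i _; rewrite -big_split; apply: eq_bigr => j _.
rewrite -big_split; apply: eq_bigr => k _; by rewrite -big_split.
Qed.

Lemma S4B f g : S4 (fun i j k l => f i j k l - g i j k l) = S4 f - S4 g.
Proof.
rewrite /S4 -sumrB; apply: eq_bigr => i _; rewrite -sumrB; apply: eq_bigr => j _.
rewrite -sumrB; apply: eq_bigr => k _; by rewrite -sumrB.
Qed.

Lemma S4N f : S4 (fun i j k l => - f i j k l) = - S4 f.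
Proof.
rewrite /S4 -sumrN; apply: eq_bigr => i _; rewrite -sumrN; apply: eq_bigr => j _.
rewrite -sumrN; apply: eq_bigr => k _; by rewrite -sumrN.
Qed.

Lemma S4Z (a : R) f : S4 (fun i j k l => a * f i j k l) = a * S4 f.
Proof.
rewrite /S4 mulr_sumr; apply: eq_bigr => i _; rewrite mulr_sumr; apply: eq_bigr => j _.
rewrite mulr_sumr; apply: eq_bigr => k _; by rewrite mulr_sumr.
Qed.

Lemma L1 (P Q : 'I_4 -> 'I_4 -> R) :
  S4 (fun i j k l => P i k * Q j l) = (\sum_(i < 4) \sum_(k < 4) P i k) * (\sum_(j < 4) \sum_(l < 4) Q j l).
Proof.
rewrite /S4 big_distrl /=; apply: eq_bigr => i _.
rewrite big_distrl /= exchange_big /=; apply: eq_bigr => k _.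
rewrite big_distrr /=; apply: eq_bigr => j _.
by rewrite big_distrr.
Qed.

Lemma L2 (P Q : 'I_4 -> 'I_4 -> R) :
  S4 (fun i j k l => P i l * Q j k) = (\sum_(i < 4) \sum_(k < 4) P i k) * (\sum_(j < 4) \sum_(l < 4) Q j l).
Proof.
rewrite -L1 /S4; apply: eq_bigr => i _; apply: eq_bigr => j _.
by rewrite exchange_big.
Qed.
End Sum4.

End M_Sum4.
Import M_Sum4.

Module M_Der.
Import Order.TTheory GRing.Theory Num.Theory.
Import numFieldNormedType.Exports.
Local Open Scope ring_scope.
Local Open Scope classical_set_scope.
Set Implicit Arguments. Unset Strict Implicit.

Section Der.
Variable R : realType.
Implicit Types f g : R -> R.

Definition IsD (a : R) f (df : R) := is_derive a 1 f df.

Lemma isdM f g (a df dg : R) : IsD a f df -> IsD a g dg ->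
  IsD a (fun z => f z * g z) (f a * dg + g a * df).
Proof. by move=> H1 H2; have := is_deriveM H1 H2. Qed.

Lemma isdD f g (a df dg : R) : IsD a f df -> IsD a g dg ->
  IsD a (fun z => f z + g z) (df + dg).
Proof. by move=> H1 H2; have := is_deriveD H1 H2. Qed.

Lemma isdB f g (a df dg : R) : IsD a f df -> IsD a g dg ->
  IsD a (fun z => f z - g z) (df - dg).
Proof. by move=> H1 H2; have := is_deriveB H1 H2. Qed.

Lemma isdN f (a df : R) : IsD a f df -> IsD a (fun z => - f z) (- df).
Proof. by move=> H1; have := is_deriveN H1. Qed.

Lemma isdC (k a : R) : IsD a (fun _ : R => k) 0.
Proof. exact: is_derive_cst. Qed.

Lemma isdI (a : R) : IsD a (fun z : R => z) 1.
Proof. exact: is_derive_id. Qed.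

Lemma isdV f (a df : R) : f a != 0 -> IsD a f df ->
  IsD a (fun z => (f z)^-1) (- (f a) ^- 2 * df).
Proof. by move=> H0 H1; have := is_deriveV H0 H1. Qed.

Lemma isdsin (a : R) : IsD a (@sin R) (cos a).
Proof. exact: is_derive_sin. Qed.
Lemma isdcos (a : R) : IsD a (@cos R) (- sin a).
Proof. exact: is_derive_cos. Qed.

Lemma D1 f (a df df' : R) : IsD a f df -> df = df' -> derive1 f a = df'.
Proof. by rewrite /IsD => H <-; rewrite derive1E derive_val. Qed.

Lemma isd_eq f (a df df' : R) : IsD a f df -> df = df' -> IsD a f df'.
Proof. by move=> H <-. Qed.


Definition dth (h : R -> R -> R) (a b : R) := derive1 (fun z => h z b) a.
Definition drr (h : R -> R -> R) (a b : R) := derive1 (h a) b.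

Lemma pd_thr (h : R -> R -> R) (x : 'rV[R]_4) (i : 'I_4) :
  pd (fun y : 'rV[R]_4 => h (y ord0 i_theta) (y ord0 i_r)) i x =
  if i == i_theta then dth h (x ord0 i_theta) (x ord0 i_r)
  else if i == i_r then drr h (x ord0 i_theta) (x ord0 i_r) else 0.
Proof.
rewrite /pd /derive /dth /drr /derive1.
have E i' k t : (t *: delta_mx ord0 i' + x) ord0 k = (if i' == k then t else 0) + x ord0 k.
  by rewrite !mxE eqxx /= eq_sym; case: eqP => _; rewrite ?mulr1 ?mulr0.
case: ifP => [/eqP->|H0].
  rewrite (_ : (fun _ => _) = (fun t : R => t^-1 *: (h (t + x ord0 i_theta) (x ord0 i_r) - h (x ord0 i_theta) (x ord0 i_r)))) //.
  by apply: funext => t /=; rewrite /shift /= !E /= !add0r.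
case: ifP => [/eqP->|H3].
  rewrite (_ : (fun _ => _) = (fun t : R => t^-1 *: (h (x ord0 i_theta) (t + x ord0 i_r) - h (x ord0 i_theta) (x ord0 i_r)))) //.
  by apply: funext => t /=; rewrite /shift /= !E /= !add0r.
rewrite (_ : (fun _ => _) = fun _ => 0); last first.
  by apply: funext => t /=; rewrite /shift /= !E H0 H3 !add0r subrr scaler0.
apply: lim_cst; exact: Rhausdorff.
Qed.

Lemma tpar (th : R) : sin th != 0 -> exists t : R,
  [/\ t != 0, sin th = 2 * t / (1 + t ^+ 2) & cos th = (1 - t ^+ 2) / (1 + t ^+ 2)].
Proof.
move=> s0; have sc := cos2Dsin2 th.
have c1 : 1 + cos th != 0.
  apply/eqP => H; have Hc : cos th = -1 by lra.
  have Hs : sin th ^+ 2 = 0.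
    by move: sc; rewrite Hc expr2 mulN1r opprK => ?; lra.
  by move: s0; rewrite -sqrf_eq0 Hs eqxx.
exists (sin th / (1 + cos th)).
have e : 1 + (sin th / (1 + cos th)) ^+ 2 = 2 / (1 + cos th).
  have -> : 1 + (sin th / (1 + cos th)) ^+ 2 = ((1 + cos th)^+2 + sin th ^+ 2) / (1 + cos th)^+2.
    by field.
  rewrite (_ : sin th ^+ 2 = 1 - cos th ^+ 2); last lra.
  by field.
split; first by rewrite mulf_neq0 ?invr_eq0.
  by rewrite e; field.
rewrite e expr_div_n (_ : sin th ^+ 2 = 1 - cos th ^+ 2); last lra.
by field.
Qed.
End Der.
Ltac isd0 := repeat first [ apply: isdC | apply: isdI | apply: isdsin | apply: isdcos
  | apply: isdM | apply: isdD | apply: isdB | apply: isdN | apply: isdV ].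


End M_Der.
Import M_Der.

Module M_Geo.
Import Order.TTheory GRing.Theory Num.Theory.
Import numFieldNormedType.Exports.
Local Open Scope ring_scope.
Local Open Scope classical_set_scope.
Set Implicit Arguments. Unset Strict Implicit.

Section Geo.
Variable R : realType.
Variables F F1 F2 : R -> R.
Hypothesis hF : forall z : R, is_derive z 1 F (F1 z).
Hypothesis hF1 : forall z : R, is_derive z 1 F1 (F2 z).

Local Notation Th := (bianchi_coframe F F).
Local Notation th y := (y ord0 i_theta).
Local Notation rr y := (y ord0 i_r).

Lemma Th_E y : Th y = \matrix_(a < 4, i < 4) thm (sin (th y)) (cos (th y)) (F (rr y)) a i.
Proof.
apply/matrixP => a i; rewrite !mxE /chart_coord.
by case: a => [[|[|[|[|?]]]] ?] //; case: i => [[|[|[|[|?]]]] ?].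
Qed.

Lemma metric_E y : metric Th y = \matrix_(j < 4, l < 4) gm (cos (th y)) (F (rr y)) j l.
Proof.
apply/matrixP => j l; rewrite /metric Th_E !mxE.
rewrite !big_ord_recr big_ord0 /= add0r !mxE.
have sc := cos2Dsin2 (th y).
case: j => [[|[|[|[|?]]]] ?] //; case: l => [[|[|[|[|?]]]] ?] //;
rewrite /thm /gm /=; try by field.
have -> : F (rr y) * F (rr y) / 4 = F (rr y) * F (rr y) / 4 * (cos (th y) ^+ 2 + sin (th y) ^+ 2).
  by rewrite sc mulr1.
by field.
Qed.

Ltac isd := repeat first [ apply: isdC | apply: isdI | apply: isdsin | apply: isdcos
  | apply: hF | apply: hF1 | apply: isdM | apply: isdD | apply: isdB | apply: isdN | apply: isdV ].

Lemma pd_metric (j l i : 'I_4) y : pd (fun z => metric Th z j l) i y =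
  dgm (sin (th y)) (cos (th y)) (F (rr y)) (F1 (rr y)) i j l.
Proof.
rewrite (_ : (fun z => metric Th z j l) =
   fun z => gm (cos (th z)) (F (rr z)) j l); last first.
  by apply: funext => z; rewrite metric_E mxE.
rewrite (pd_thr (fun a b => gm (cos a) (F b) j l)) /dth /drr.
case: i => [[|[|[|[|?]]]] Hi] //; rewrite /i_theta /i_r /dgm /=; try done.
- case: j => [[|[|[|[|?]]]] ?] //; case: l => [[|[|[|[|?]]]] ?] //; rewrite /gm /=;
  (eapply D1; [isd | rewrite /=; rewrite /=; first [done | by field] ]).
- case: j => [[|[|[|[|?]]]] ?] //; case: l => [[|[|[|[|?]]]] ?] //; rewrite /gm /=;
  (eapply D1; [isd | rewrite /=; first [done | by field] ]).
Qed.

Lemma invmx_eq (A B : 'M[R]_4) : A *m B = 1%:M -> invmx A = B.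
Proof.
move=> H; have [uA _] := mulmx1_unit H.
by rewrite -[invmx A]mulmx1 -H mulmxA mulVmx // mul1mx.
Qed.

Lemma metric_inv_E (y : 'rV[R]_4) : sin (th y) != 0 -> F (rr y) != 0 ->
  metric_inv Th y = \matrix_(j < 4, l < 4) ginv (sin (th y)) (cos (th y)) (F (rr y)) j l.
Proof.
move=> s0 F0; rewrite /metric_inv metric_E; apply: invmx_eq.
apply/matrixP => j l; rewrite !mxE.
under eq_bigr do rewrite !mxE.
have [t [t0 -> ->]] := tpar s0.
by rewrite A3.
Qed.

Lemma chr_E (k i j : 'I_4) (y : 'rV[R]_4) : sin (th y) != 0 -> F (rr y) != 0 ->
  christoffel Th k i j y = Gt (sin (th y)) (cos (th y)) (F (rr y)) (F1 (rr y)) k i j.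
Proof.
move=> s0 F0; rewrite /christoffel metric_inv_E //.
under eq_bigr do rewrite !pd_metric mxE.
have [t [t0 -> ->]] := tpar s0.
by rewrite A2.
Qed.

Lemma dthf_ok (n : nat) (K a : R) : sin a != 0 ->
  derive1 (fun z => thf n (sin z) (cos z) * K) a = dthf n (sin a) (cos a) * K.
Proof.
move=> s0; have sc := cos2Dsin2 a.
have s2 : 2 * sin a != 0 by rewrite mulf_neq0.
case: n => [|[|[|[|[|n]]]]] /=.
all: eapply D1; [isd | rewrite /=].
all: try done.
all: by field.
Qed.

Lemma drf_ok (n : nat) (K a : R) : F a != 0 ->
  derive1 (fun z => K * rf n (F z) (F1 z)) a = K * drf n (F a) (F1 a) (F2 a).
Proof.
move=> F0.
case: n => [|[|n]] /=.
all: eapply D1; [isd | rewrite /=].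
all: try done.
all: by field.
Qed.

Lemma contF : continuous F.
Proof. by move=> z; apply/differentiable_continuous/derivable1_diffP; case: (hF z). Qed.

Lemma near_nz (x : 'rV[R]_4) : sin (th x) != 0 -> F (rr x) != 0 ->
  \forall y \near x, sin (th (y : 'rV[R]_4)) != 0 /\ F (rr y) != 0.
Proof.
move=> s0 F0.
have c1 : {for x, continuous (fun y : 'rV[R]_4 => sin (th y))}.
  apply: (continuous_comp (f := fun y : 'rV[R]_4 => th y) (g := sin)).
    exact: coord_continuous.
  exact: continuous_sin.
have c2 : {for x, continuous (fun y : 'rV[R]_4 => F (rr y))}.
  apply: (continuous_comp (f := fun y : 'rV[R]_4 => rr y) (g := F)).
    exact: coord_continuous.
  exact: contF.
have n1 := cvgr_neq0 _ c1 s0.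
have n2 := cvgr_neq0 _ c2 F0.
by near=> y; split; [near: y; exact: n1 | near: y; exact: n2].
Unshelve. all: by end_near.
Qed.

Lemma pd_chr (k i j d : 'I_4) (x : 'rV[R]_4) : sin (th x) != 0 -> F (rr x) != 0 ->
  pd (christoffel Th k i j) d x =
  dGt (sin (th x)) (cos (th x)) (F (rr x)) (F1 (rr x)) (F2 (rr x)) d k i j.
Proof.
move=> s0 F0.
rewrite (_ : pd (christoffel Th k i j) d x =
  pd (fun y => Gt (sin (th y)) (cos (th y)) (F (rr y)) (F1 (rr y)) k i j) d x); last first.
  rewrite /pd; apply: near_eq_derive.
  by apply: filterS (near_nz s0 F0) => y [s0' F0']; exact: chr_E.
rewrite (pd_thr (fun a b => Gt (sin a) (cos a) (F b) (F1 b) k i j)) /dth /drr /Gt /dGt.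
case: d => [[|[|[|[|?]]]] Hd] //; rewrite /i_theta /i_r /=.
- exact: dthf_ok.
- exact: drf_ok.
Qed.

Lemma rup_E (m i j l : 'I_4) (x : 'rV[R]_4) : sin (th x) != 0 -> F (rr x) != 0 ->
  riemann_up Th m i j l x = Uup (cos (th x)) (F (rr x)) (F1 (rr x)) (F2 (rr x)) m i j l.
Proof.
move=> s0 F0; rewrite /riemann_up !pd_chr //.
under eq_bigr do rewrite !chr_E //.
have [t [t0 es ec]] := tpar s0.
rewrite es ec; exact: Rup_ok.
Qed.

Lemma rdown_E (i j k l : 'I_4) (x : 'rV[R]_4) : sin (th x) != 0 -> F (rr x) != 0 ->
  riemann_down Th i j k l x = Rd (cos (th x)) (F (rr x)) (Kt (F (rr x)) (F1 (rr x)))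
     (Kr (F (rr x)) (F2 (rr x)) - Kt (F (rr x)) (F1 (rr x))) i j k l.
Proof.
move=> s0 F0; rewrite /riemann_down metric_E.
under eq_bigr do rewrite mxE rup_E //.
exact: A4.
Qed.

Lemma frame_E (x : 'rV[R]_4) : sin (th x) != 0 -> F (rr x) != 0 ->
  frame Th x = \matrix_(a < 4, i < 4) einv (sin (th x)) (cos (th x)) (F (rr x)) a i.
Proof.
move=> s0 F0; rewrite /frame Th_E; apply: invmx_eq.
apply/matrixP => a i; rewrite !mxE.
under eq_bigr do rewrite !mxE.
by rewrite A5.
Qed.

Lemma rframe_E (a b c d : 'I_4) (x : 'rV[R]_4) : sin (th x) != 0 -> F (rr x) != 0 ->
  riemann_frame Th a b c d x =
  Kt (F (rr x)) (F1 (rr x)) * (dl a c * dl b d - dl a d * dl b c)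
  + (Kr (F (rr x)) (F2 (rr x)) - Kt (F (rr x)) (F1 (rr x))) *
    (dl a c * (dl b 3 * dl d 3) + (dl a 3 * dl c 3) * dl b d
     - dl a d * (dl b 3 * dl c 3) - (dl a 3 * dl d 3) * dl b c).
Proof.
move=> s0 F0.
rewrite (_ : riemann_frame Th a b c d x = S4 (fun i j k l => frame Th x i a * frame Th x j b
   * frame Th x k c * frame Th x l d * riemann_down Th i j k l x)) //.
set kt := Kt _ _; set dd := (Kr _ _ - _).
set E := einv (sin (th x)) (cos (th x)) (F (rr x)).
set G := gm (cos (th x)) (F (rr x)).
pose N (i k : nat) : R := dl i 3 * dl k 3.
have QG (a' c' : 'I_4) : \sum_(i < 4) \sum_(k < 4) E i a' * E k c' * G i k = dl a' c'.
  have [t [t0 es ec]] := tpar s0.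
  by rewrite /E /G es ec A6.
have QN (a' c' : 'I_4) : \sum_(i < 4) \sum_(k < 4) E i a' * E k c' * N i k = dl a' 3 * dl c' 3.
  rewrite !big_ord_recr !big_ord0 /= /N /dl /= !(mulr0, mul0r, addr0, add0r, mulr1).
  by case: a' => [[|[|[|[|?]]]] ?]; case: c' => [[|[|[|[|?]]]] ?].
rewrite (_ : (fun i j k l => _) = fun i j k l : 'I_4 =>
   kt * ((E i a * E k c * G i k) * (E j b * E l d * G j l))
   - kt * ((E i a * E l d * G i l) * (E j b * E k c * G j k))
   + dd * ((E i a * E k c * G i k) * (E j b * E l d * N j l))
   + dd * ((E i a * E k c * N i k) * (E j b * E l d * G j l))
   - dd * ((E i a * E l d * G i l) * (E j b * E k c * N j k))
   - dd * ((E i a * E l d * N i l) * (E j b * E k c * G j k))); last first.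
  apply: funext => i; apply: funext => j; apply: funext => k; apply: funext => l.
  rewrite frame_E // !mxE rdown_E // /Rd /N -/kt -/dd -/G -/E; ring.
rewrite !S4B !S4D !S4N !S4Z.
rewrite (L1 (fun i k : 'I_4 => E i a * E k c * G i k) (fun j l : 'I_4 => E j b * E l d * G j l)).
rewrite (L2 (fun i l : 'I_4 => E i a * E l d * G i l) (fun j k : 'I_4 => E j b * E k c * G j k)).
rewrite (L1 (fun i k : 'I_4 => E i a * E k c * G i k) (fun j l : 'I_4 => E j b * E l d * N j l)).
rewrite (L1 (fun i k : 'I_4 => E i a * E k c * N i k) (fun j l : 'I_4 => E j b * E l d * G j l)).
rewrite (L2 (fun i l : 'I_4 => E i a * E l d * G i l) (fun j k : 'I_4 => E j b * E k c * N j k)).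
rewrite (L2 (fun i l : 'I_4 => E i a * E l d * N i l) (fun j k : 'I_4 => E j b * E k c * G j k)).
rewrite !QG !QN; ring.
Qed.
End Geo.

End M_Geo.
Import M_Geo.

Module M_Main2.
Import Order.TTheory GRing.Theory Num.Theory.
Import numFieldNormedType.Exports.
Local Open Scope ring_scope.
Set Implicit Arguments. Unset Strict Implicit.

Section Main2.
Variable R : realType.

Lemma bound_frac (e Y F L M : R) : 0 < L -> L <= F -> `|Y| <= M ->
  `|e ^+ 2 * Y / F| <= e ^+ 2 * (M / L).
Proof.
move=> L0 LF YM; have F0 : 0 < F by apply: lt_le_trans LF.
rewrite normrM normrV ?unitfE ?gt_eqF // normrM normrX real_normK ?num_real //.
rewrite (gtr0_norm F0) -mulrA ler_wpM2l ?sqr_ge0 //.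
apply: (@le_trans _ _ (M / F)); first by rewrite ler_wpM2r // invr_ge0 ltW.
rewrite ler_wpM2l //; first by apply: le_trans YM.
by rewrite lef_pV2 ?posrE.
Qed.

Lemma norm_lin (e y0 y1 : R) : `|e| <= 1 -> `|y0 + e * y1| <= `|y0| + `|y1|.
Proof.
move=> e1; apply: (le_trans (ler_normD _ _)); rewrite lerD2l normrM.
by rewrite -[X in _ <= X]mul1r ler_wpM2r.
Qed.

Lemma part2 : forall (c1 c2 : R) (x : 'rV[R]_4),
     0 < chart_coord x i_theta < pi -> 0 < chart_coord x i_r < pi ->
     forall a b c d : 'I_4,
       exists C delta : R, 0 < delta /\
         forall eps : R, `|eps| < delta ->
           `| riemann_frame
                (bianchi_coframe (fun r => sin r + eps * sol c1 c2 r)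
                                 (fun r => sin r + eps * sol c1 c2 r))
                a b c d x
              - (1 - 2 * eps * c2) *
                (((a == c)%:R * (b == d)%:R) - ((a == d)%:R * (b == c)%:R)) |
           <= C * eps ^+ 2.
Proof.
move=> c1 c2 x thx rx a b c d.
rewrite /chart_coord in thx rx.
set th := x ord0 i_theta in thx *; set r := x ord0 i_r in rx *.
have sth : sin th != 0 by rewrite gt_eqF // sin_gt0_pi.
set s := sin r; have s0 : 0 < s by rewrite sin_gt0_pi.
set p := sol c1 c2 r.
set p1 := - c1 * sin r + c2 * (r * sin r).
set y0 := - (p1 * p1) - p * p + 4 * c2 * s * p.
set y1 := 2 * c2 * (p * p).
set T1 : R := dl a c * dl b d - dl a d * dl b c.
set T2 : R := dl a c * (dl b 3 * dl d 3) + (dl a 3 * dl c 3) * dl b d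
     - dl a d * (dl b 3 * dl c 3) - (dl a 3 * dl d 3) * dl b c.
have T1E : ((a == c)%:R * (b == d)%:R - (a == d)%:R * (b == c)%:R) = T1 by [].
exists (((`|y0| + `|y1|) / (s * s / 4)) * `|T1 - T2| + (`|2 * c2 * p| / (s / 2)) * `|T2|).
exists (Num.min 1 (s / (2 * (`|p| + 1)))).
split.
  by rewrite lt_min ltr01 /= divr_gt0 // mulr_gt0 // ltr_wpDl.
move=> eps; rewrite lt_min => /andP[e1 e2].
pose Fe := fun z : R => sin z + eps * sol c1 c2 z.
pose F1e := fun z : R => cos z + eps * (- c1 * sin z + c2 * (z * sin z)).
pose F2e := fun z : R => - sin z + eps * (- c1 * cos z + c2 * (sin z + z * cos z)).
have hF : forall z : R, is_derive z 1 Fe (F1e z).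
  move=> z; rewrite /Fe /F1e /sol; eapply isd_eq; [isd0 | rewrite /=; ring].
have hF1 : forall z : R, is_derive z 1 F1e (F2e z).
  move=> z; rewrite /F2e /F1e; eapply isd_eq; [isd0 | rewrite /=; ring].
have Fr : s / 2 <= Fe r.
  have h1 : `|eps| * (2 * (`|p| + 1)) < s by rewrite -ltr_pdivlMr // mulr_gt0 // ltr_wpDl.
  have h2 := ler_norm (- (eps * p)); rewrite normrN normrM in h2.
  have h3 : 0 <= `|eps| := normr_ge0 _.
  have h4 : 0 <= `|p| := normr_ge0 _.
  rewrite /Fe -/p -/s; nra.
have Fp : 0 < Fe r by rewrite (lt_le_trans _ Fr) // divr_gt0.
have F0 : Fe r != 0 by rewrite gt_eqF.
rewrite (rframe_E hF hF1 a b c d sth F0) -/r -/T1 -/T2.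
have sc := cos2Dsin2 r.
have key : (cos r ^+ 2 + sin r ^+ 2 - F1e r * F1e r) - (1 - 2 * eps * c2) * (Fe r * Fe r)
   = eps ^+ 2 * (y0 + eps * y1).
  by rewrite /F1e /Fe /y0 /y1 /p /p1 /s /sol; ring.
rewrite sc in key.
have eKt : Kt (Fe r) (F1e r) - (1 - 2 * eps * c2) = eps ^+ 2 * (y0 + eps * y1) / (Fe r * Fe r).
  rewrite -key /Kt; field; by rewrite F0.
have eKr : Kr (Fe r) (F2e r) - (1 - 2 * eps * c2) = eps ^+ 2 * (2 * c2 * p) / Fe r.
  rewrite /Kr; move: F0; rewrite /Fe /F2e /p /sol => F0; field; by rewrite F0.
rewrite (_ : forall kt kr k : R, kt * T1 + (kr - kt) * T2 - k * T1 = (kt - k) * (T1 - T2) + (kr - k) * T2); last by move=> *; ring.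
rewrite eKt eKr.
apply: (le_trans (ler_normD _ _)); rewrite (normrM _ (T1 - T2)) (normrM _ T2).
have e1' : `|eps| <= 1 by rewrite ltW.
have b1 := @bound_frac eps (y0 + eps * y1) (Fe r * Fe r) (s * s / 4) (`|y0| + `|y1|).
have b2 := @bound_frac eps (2 * c2 * p) (Fe r) (s / 2) (`|2 * c2 * p|).
have L1 : 0 < s * s / 4 by rewrite divr_gt0 // mulr_gt0.
have L2 : s * s / 4 <= Fe r * Fe r.
  rewrite (_ : s * s / 4 = (s / 2) * (s / 2)); last by field.
  by rewrite ler_pM // divr_ge0 // ltW.
have := b1 L1 L2 (norm_lin _ _ e1'); move=> {}b1.
have := b2 (divr_gt0 s0 (ltr0Sn _ _)) Fr (lexx _); move=> {}b2.
rewrite [X in _ <= X](_ : _ = eps ^+ 2 * ((`|y0| + `|y1|) / (s * s / 4)) * `|T1 - T2|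
   + eps ^+ 2 * (`|2 * c2 * p| / (s / 2)) * `|T2|); last by ring.
by apply: lerD; apply: ler_wpM2r.
Qed.
End Main2.

End M_Main2.
Import M_Main2.

Module M_Ode.
Import Order.TTheory GRing.Theory Num.Theory.
Import numFieldNormedType.Exports.
Local Open Scope ring_scope.
Local Open Scope classical_set_scope.
Set Implicit Arguments. Unset Strict Implicit.

Section Ode.
Variable R : realType.
Implicit Types f g h : R -> R.

Lemma isd_cont f (a df : R) : IsD a f df -> {for a, continuous f}.
Proof. by move=> [H _]; apply/differentiable_continuous/derivable1_diffP. Qed.

Lemma sm_isd f (Hf : smooth f) n (x : R) : IsD x (derive1n n f) (derive1n n.+1 f x).
Proof. by rewrite /IsD derive1nS derive1E; apply: derivableP; exact: Hf. Qed.

Lemma zero_ext h (a b z0 : R) : a < b -> z0 = a \/ z0 = b -> {for z0, continuous h} ->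
  (forall y, a < y < b -> h y = 0) -> h z0 = 0.
Proof.
move=> ab hz hc hz0; apply/eqP; apply: contraT => hn.
have H : \forall t \near z0, h t != 0 by apply: (cvgr_neq0 _ hc hn).
have := (nbhs_normP _ _).1 H; case=> e /= e0 He.
set m := Num.min e (b - a) / 2.
have hm1 : Num.min e (b - a) <= e by rewrite ge_min lexx.
have hm2 : Num.min e (b - a) <= b - a by rewrite ge_min lexx orbT.
have hm0 : 0 < Num.min e (b - a) by rewrite lt_min e0 subr_gt0 ab.
have m0 : 0 < m by rewrite /m; lra.
have me : m < e by rewrite /m; lra.
have mba : m < b - a by rewrite /m; lra.
case: hz => hz; rewrite hz in He.
- have := He (a + m); rewrite /= hz0; last by apply/andP; split; lra.
  by rewrite eqxx; apply; rewrite opprD addrA subrr sub0r normrN gtr0_norm.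
- have := He (b - m); rewrite /= hz0; last by apply/andP; split; lra.
  by rewrite eqxx; apply; rewrite opprB addrC subrK gtr0_norm.
Qed.

Lemma isd_val f (a df : R) : IsD a f df -> 'D_1 f a = df.
Proof. by case. Qed.

Lemma maxp (v v1 v2 : R -> R) :
  (forall z, IsD z v (v1 z)) -> (forall z, IsD z v1 (v2 z)) -> continuous v2 ->
  (forall z, 0 < z < pi -> sin z * sin z * v2 z + sin z * cos z * v1 z
                          + (2 * (sin z * sin z) - 9) * v z = 0) ->
  v 0 = 0 -> v pi = 0 -> forall z, 0 <= z <= pi -> v z <= 0.
Proof.
move=> d0 d1 c2 E v0 vpi z zI.
rewrite leNgt; apply/negP => vz.
have cv : continuous v := fun z => isd_cont (d0 z).
have cvw : {within `[0, pi], continuous v} by apply: continuous_subspaceT.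
have [c cI cmax] := EVT_max (@pi_ge0 R) cvw.
have vc : 0 < v c by apply: (lt_le_trans vz); apply: cmax; rewrite in_itv.
move: cI; rewrite in_itv /= => /andP[c0 cpi].
have c0' : 0 < c by rewrite lt_neqAle c0 andbT; apply/eqP => ec; move: vc; rewrite -ec v0 ltxx.
have cpi' : c < pi by rewrite lt_neqAle cpi andbT; apply/eqP => ec; move: vc; rewrite ec vpi ltxx.
have v1c : v1 c = 0.
  have H1 : is_derive c 1 v 0.
    apply: (@derive1_at_max _ v 0 pi c (@pi_ge0 R)).
    - by move=> t _; case: (d0 t).
    - by rewrite in_itv /= c0' cpi'.
    - by move=> t; rewrite in_itv /= => /andP[t0 tpi]; apply: cmax; rewrite in_itv /= !ltW.
  by rewrite -(isd_val (d0 c)); case: H1.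
have sc0 : 0 < sin c by apply: sin_gt0_pi; rewrite c0' cpi'.
have sc1 : sin c <= 1 := sin_le1 c.
have v2c : 0 < v2 c.
  have := E c; rewrite c0' cpi' v1c => /(_ isT) Ec.
  rewrite ltNge; apply/negP => v2n.
  have h1 : sin c * sin c * v2 c <= 0.
    by rewrite mulr_ge0_le0 // mulr_ge0 // ltW.
  have h2 : (2 * (sin c * sin c) - 9) * v c < 0.
    rewrite pmulr_llt0 // subr_lt0; nra.
  lra.
have H : \forall t \near c, 0 < v2 t := cvgr_gt _ (c2 c) 0 v2c.
have := (nbhs_normP _ _).1 (H _); case=> e /= e0 He.
set m := Num.min e (pi - c) / 2.
have hm1 : Num.min e (pi - c) <= e by rewrite ge_min lexx.
have hm2 : Num.min e (pi - c) <= pi - c by rewrite ge_min lexx orbT.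
have hm0 : 0 < Num.min e (pi - c) by rewrite lt_min e0 subr_gt0 cpi'.
have m0 : 0 < m by rewrite /m; lra.
have me : m < e by rewrite /m; lra.
have mpi : m < pi - c by rewrite /m; lra.
have ct : c < c + m by lra.
have cvw2 : {within `[c, c + m], continuous v} by apply: continuous_subspaceT.
have [xi xiI Exi] := MVT ct (fun x _ => d0 x) cvw2.
move: xiI; rewrite in_itv /= => /andP[xi1 xi2].
have cv1 : continuous v1 := fun z => isd_cont (d1 z).
have cvw3 : {within `[c, xi], continuous v1} by apply: continuous_subspaceT.
have [eta etaI Eeta] := MVT xi1 (fun x _ => d1 x) cvw3.
move: etaI; rewrite in_itv /= => /andP[eta1 eta2].
have v2eta : 0 < v2 eta.
  apply: He; rewrite /= ltr0_norm ?subr_lt0 //; lra.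
have v1xi : 0 < v1 xi.
  by move: Eeta; rewrite v1c subr0 => ->; rewrite mulr_gt0 // subr_gt0.
have : v (c + m) <= v c by apply: cmax; rewrite in_itv /=; apply/andP; split; lra.
have : 0 < v (c + m) - v c by rewrite Exi mulr_gt0 // subr_gt0.
lra.
Qed.
End Ode.

End M_Ode.
Import M_Ode.

Module M_Main1.
Import Order.TTheory GRing.Theory Num.Theory.
Import numFieldNormedType.Exports.
Local Open Scope ring_scope.
Local Open Scope classical_set_scope.
Set Implicit Arguments. Unset Strict Implicit.

Section Main1.
Variable R : realType.
Implicit Types f g h : R -> R.

Definition sol1 (c1 c2 z : R) := - c1 * sin z + c2 * (z * sin z).
Definition sol2 (c1 c2 z : R) := - c1 * cos z + c2 * (sin z + z * cos z).

Lemma isd_sol c1 c2 z : IsD z (sol c1 c2) (sol1 c1 c2 z).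
Proof. rewrite /sol /sol1; eapply isd_eq; [isd0 | rewrite /=; ring]. Qed.

Lemma isd_sol1 c1 c2 z : IsD z (sol1 c1 c2) (sol2 c1 c2 z).
Proof. rewrite /sol1 /sol2; eapply isd_eq; [isd0 | rewrite /=; ring]. Qed.

Lemma dsol c1 c2 : derive1 (sol c1 c2) = sol1 c1 c2.
Proof. by apply: funext => z; apply: D1 (isd_sol c1 c2 z) _. Qed.

Lemma dsol2 c1 c2 z : derive1 (derive1 (sol c1 c2)) z = sol2 c1 c2 z.
Proof. by rewrite dsol; apply: D1 (isd_sol1 c1 c2 z) _. Qed.

Lemma near_d1 f g (z : R) : 0 < z < pi -> (forall y, 0 < y < pi -> f y = g y) ->
  derive1 f z = derive1 g z.
Proof.
move=> zI H; rewrite !derive1E; apply: near_eq_derive.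
have : z \in `]0, pi[%R by rewrite in_itv.
move/(near_in_itvoo (a := 0) (b := pi)).
by apply: filterS => y; rewrite in_itv /=; apply: H.
Qed.

Lemma const_oo f : (forall z, 0 < z < pi -> IsD z f 0) ->
  forall z w, 0 < z < pi -> 0 < w < pi -> f z = f w.
Proof.
move=> Hf z w zI wI.
wlog zw : z w zI wI / z <= w.
  move=> W; case: (leP z w) => [|/ltW] h; first exact: W.
  by apply/esym/W.
have cw : {within `[z, w], continuous f}.
  apply: continuous_in_subspaceT => x; rewrite inE /= in_itv /= => /andP[h1 h2].
  apply: (isd_cont (df := 0)); apply: Hf; apply/andP; split; lra.
have dH : forall x, x \in `]z, w[%R -> is_derive x 1 f ((fun _ => 0) x).
  move=> x; rewrite in_itv /= => /andP[h1 h2]; apply: Hf; apply/andP; split; lra.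
have [c _ E] := MVT_segment zw dH cw.
by apply/eqP; rewrite eq_sym -subr_eq0 E mul0r.
Qed.

Lemma part1 (p q : R -> R) : smooth p -> smooth q ->
  ((forall r : R, 0 < r < pi -> linearized_system p q r) <->
   (exists c1 c2 : R, forall r : R, 0 <= r <= pi ->
      p r = sol c1 c2 r /\ q r = sol c1 c2 r)).
Proof.
move=> Hp Hq.
have dp0 z : IsD z p (derive1 p z) := sm_isd Hp 0 z.
have dp1 z : IsD z (derive1 p) (derive1n 2 p z) := sm_isd Hp 1 z.
have dp2 z : IsD z (derive1n 2 p) (derive1n 3 p z) := sm_isd Hp 2 z.
have dq0 z : IsD z q (derive1 q z) := sm_isd Hq 0 z.
have dq1 z : IsD z (derive1 q) (derive1n 2 q z) := sm_isd Hq 1 z.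
have dq2 z : IsD z (derive1n 2 q) (derive1n 3 q z) := sm_isd Hq 2 z.
split; last first.
  case=> c1 [c2 H] r rI.
  have rI' : 0 <= r <= pi by case/andP: rI => *; apply/andP; split; apply: ltW.
  have oo y : 0 < y < pi -> 0 <= y <= pi by case/andP => *; apply/andP; split; apply: ltW.
  have ep1 y : 0 < y < pi -> derive1 p y = sol1 c1 c2 y.
    by move=> yI; rewrite -dsol; apply: near_d1 => // t /oo /H [].
  have eq1 y : 0 < y < pi -> derive1 q y = sol1 c1 c2 y.
    by move=> yI; rewrite -dsol; apply: near_d1 => // t /oo /H [].
  have ep2 : derive1n 2 p r = sol2 c1 c2 r.
    rewrite -dsol2 /=; apply: near_d1 => // t tI; rewrite ep1 // dsol //.
  have eq2 : derive1n 2 q r = sol2 c1 c2 r.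
    rewrite -dsol2 /=; apply: near_d1 => // t tI; rewrite eq1 // dsol //.
  have s0 : sin r != 0 by rewrite gt_eqF // sin_gt0_pi.
  have [e1 e2] := H r rI'.
  rewrite /linearized_system ep2 eq2 ep1 // eq1 // e1 e2 /cot /sol /sol1 /sol2.
  by split; field.
move=> H.
pose U0 := fun z => p z - q z.
pose U1 := fun z => derive1 p z - derive1 q z.
pose U2 := fun z => derive1n 2 p z - derive1n 2 q z.
have dU0 z : IsD z U0 (U1 z) by apply: isdB.
have dU1 z : IsD z U1 (U2 z) by apply: isdB.
have dU2 z : IsD z U2 (derive1n 3 p z - derive1n 3 q z) by apply: isdB.
have cU2 : continuous U2 := fun z => isd_cont (dU2 z).
pose h := fun z => sin z * sin z * U2 z + sin z * cos z * U1 z + (2 * (sin z * sin z) - 9) * U0 z.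
have EU z : 0 < z < pi -> h z = 0.
  move=> zI; have s0 : sin z != 0 by rewrite gt_eqF // sin_gt0_pi.
  have [e1 e2] := H z zI.
  have eP2 : derive1n 2 p z = (derive1 p z + derive1 q z) * cot z + 3 / sin z ^+ 2 * (p z - q z) + q z.
    by rewrite -e1; ring.
  have eQ2 : derive1n 2 q z = 2 * derive1 p z * cot z - 6 / sin z ^+ 2 * (p z - q z) - q z + 2 * p z.
    by rewrite -e2; ring.
  rewrite /h /U0 /U1 /U2 eP2 eQ2 /cot; field.
  by rewrite s0.
have ch : continuous h.
  move=> z; apply: (isd_cont (df := _)); rewrite /h.
  repeat first [ apply: isdC | apply: isdI | apply: isdsin | apply: isdcos
    | apply: dU0 | apply: dU1 | apply: dU2
    | apply: isdM | apply: isdD | apply: isdB | apply: isdN ].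
have pi0 : (0 : R) < pi := pi_gt0 R.
have U00 : U0 0 = 0.
  have := @zero_ext _ h 0 pi 0 pi0 (or_introl erefl) (ch 0) EU.
  rewrite /h sin0 !(mul0r, mulr0, add0r, sub0r) => /eqP; rewrite mulf_eq0 oppr_eq0.
  by case/orP => /eqP // /eqP; rewrite pnatr_eq0.
have U0pi : U0 pi = 0.
  have := @zero_ext _ h 0 pi pi pi0 (or_intror erefl) (ch pi) EU.
  rewrite /h sinpi !(mul0r, mulr0, add0r, sub0r) => /eqP; rewrite mulf_eq0 oppr_eq0.
  by case/orP => /eqP // /eqP; rewrite pnatr_eq0.
have Ule : forall z, 0 <= z <= pi -> U0 z <= 0 := maxp dU0 dU1 cU2 EU U00 U0pi.
have Uge : forall z, 0 <= z <= pi -> (fun z => - U0 z) z <= 0.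
  apply: (@maxp R (fun z => - U0 z) (fun z => - U1 z) (fun z => - U2 z)).
  - by move=> z; apply: isdN.
  - by move=> z; apply: isdN.
  - by move=> z; apply: (isd_cont (isdN (dU2 z))).
  - by move=> z zI; have := EU z zI; rewrite /h => E; lra.
  - by rewrite U00 oppr0.
  - by rewrite U0pi oppr0.
have pq z : 0 <= z <= pi -> q z = p z.
  move=> zI; have h1 := Ule z zI; have h2 := Uge z zI; rewrite /= /U0 in h1 h2; lra.
have oo y : 0 < y < pi -> 0 <= y <= pi by case/andP => *; apply/andP; split; apply: ltW.
have pq1 z : 0 < z < pi -> derive1 q z = derive1 p z.
  by move=> zI; apply: near_d1 => // t /oo /pq.
have EP z : 0 < z < pi -> derive1 (derive1 p) z = p z + 2 * derive1 p z * cos z / sin z.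
  move=> zI; change (derive1n 2 p z = p z + 2 * derive1 p z * cos z / sin z); have s0 : sin z != 0 by rewrite gt_eqF // sin_gt0_pi.
  have [e1 _] := H z zI.
  rewrite pq ?oo // pq1 // subrr mulr0 addr0 in e1.
  by rewrite -[derive1n 2 p z](subrK (p z)) e1 /cot; field.
pose A := fun z => (p z * (z * sin z) - derive1 p z * (sin z - z * cos z)) / (sin z * sin z).
pose B := fun z => (cos z * derive1 p z + sin z * p z) / (sin z * sin z).
have dA z : 0 < z < pi -> IsD z A 0.
  move=> zI; have s0 : sin z != 0 by rewrite gt_eqF // sin_gt0_pi.
  have ss : sin z * sin z != 0 by rewrite mulf_neq0.
  eapply isd_eq; rewrite /A.
    repeat first [ apply: isdC | apply: isdI | apply: isdsin | apply: isdcos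
      | apply: dp0 | apply: dp1
      | apply: isdM | apply: isdD | apply: isdB | apply: isdN | apply: isdV ].
  all: try done.
  by rewrite /= EP //; field.
have dB z : 0 < z < pi -> IsD z B 0.
  move=> zI; have s0 : sin z != 0 by rewrite gt_eqF // sin_gt0_pi.
  have ss : sin z * sin z != 0 by rewrite mulf_neq0.
  eapply isd_eq; rewrite /B.
    repeat first [ apply: isdC | apply: isdI | apply: isdsin | apply: isdcos
      | apply: dp0 | apply: dp1
      | apply: isdM | apply: isdD | apply: isdB | apply: isdN | apply: isdV ].
  all: try done.
  by rewrite /= EP //; field.
have pi2 : 0 < (pi : R) / 2 < pi by apply/andP; split; lra.
exists (A (pi / 2)), (B (pi / 2)).
have psol z : 0 < z < pi -> p z = sol (A (pi / 2)) (B (pi / 2)) z.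
  move=> zI; have s0 : sin z != 0 by rewrite gt_eqF // sin_gt0_pi.
  rewrite -(const_oo dA zI pi2) -(const_oo dB zI pi2) /A /B /sol; field.
  by rewrite s0.
set c1 := A (pi / 2); set c2 := B (pi / 2).
have cd : continuous (fun z => p z - sol c1 c2 z).
  by move=> z; apply: (isd_cont (isdB (dp0 z) (isd_sol c1 c2 z))).
have pe z : 0 <= z <= pi -> p z = sol c1 c2 z.
  move=> zI; have [->|z0] := eqVneq z 0.
    apply/eqP; rewrite -subr_eq0; apply/eqP.
    apply: (@zero_ext _ (fun z => p z - sol c1 c2 z) 0 pi 0 pi0 (or_introl erefl) (cd 0)).
    by move=> y yI; rewrite psol // subrr.
  have [->|zpi] := eqVneq z pi.
    apply/eqP; rewrite -subr_eq0; apply/eqP.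
    apply: (@zero_ext _ (fun z => p z - sol c1 c2 z) 0 pi pi pi0 (or_intror erefl) (cd pi)).
    by move=> y yI; rewrite psol // subrr.
  apply: psol; case/andP: zI => h1 h2; apply/andP; split; rewrite lt_neqAle ?h1 ?h2 ?andbT //.
    by rewrite eq_sym.
move=> r rI; split; first exact: pe.
by rewrite pq // pe.
Qed.
End Main1.

End M_Main1.
Import M_Main1.

Local Open Scope ring_scope.

Theorem mainTheorem2 (R : realType) :
  (forall p q : R -> R, smooth p -> smooth q ->
     ((forall r : R, 0 < r < pi -> linearized_system p q r) <->
      (exists c1 c2 : R, forall r : R, 0 <= r <= pi ->
          p r = sol c1 c2 r /\ q r = sol c1 c2 r)))
  /\
  (forall (c1 c2 : R) (x : 'rV[R]_4),
     0 < chart_coord x i_theta < pi -> 0 < chart_coord x i_r < pi ->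
     forall a b c d : 'I_4,
       exists C delta : R, 0 < delta /\
         forall eps : R, `|eps| < delta ->
           `| riemann_frame
                (bianchi_coframe (fun r => sin r + eps * sol c1 c2 r)
                                 (fun r => sin r + eps * sol c1 c2 r))
                a b c d x
              - (1 - 2 * eps * c2) *
                (((a == c)%:R * (b == d)%:R) - ((a == d)%:R * (b == c)%:R)) |
           <= C * eps ^+ 2).
Proof.
split.
  by move=> p q Hp Hq; exact: part1.
exact: part2.
Qed.
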